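(* Let $(X,d_X)$ be a metric space with density character $\kappa$. Suppose there are $C\in[1,\infty)$ and $D\in[0,\infty)$ such that $\Delta_X^{(c)}(R)\leq CR+D$ for all $R\in[0,\infty)$. Then for any $\lambda>0$, any $K>2(C+\lambda)$, and any $L>\frac{(C+\lambda)D}{\lambda}$, there exists a coarse Lipschitz embedding $f\colon X\to c_0^+(\kappa)$ such that \[d_X(x,y)-L\leq \|f(x)-f(y)\|_{\infty}\leq K\,d_X(x,y)\] for every $x,y\in X$. If $D=0$, then it is possible to take $L=0$.
   Context: The density character $\mathrm{dens}(X)$ is the smallest cardinality of a dense subset of $X$. For a cardinal $\kappa$, $c_0(\kappa)$ is the space of real families $(x_\xi)_{\xi<\kappa}$ such that $\{\xi : |x_\xi|>\eta\}$ is finite for every $\eta>0$, with the sup norm, and $c_0^+(\kappa)=\{x\in c_0(\kappa): x_\xi\geq 0 \text{ for all }\xi\}$ with the metric inherited from $c_0(\kappa)$. For a family $\mathcal{U}$ of subsets covering $X$: $\mathrm{diam}(\mathcal{U})=\sup\{\mathrm{diam}(U): U\in\mathcal{U}\}$; the Lebesgue number is $\mathcal{L}(\mathcal{U})=\sup\{d\in[0,\infty): \text{every } E\subseteq X \text{ with } \mathrm{diam}(E)<d \text{ is contained in some } U\in\mathcal{U}\}$; $\mathcal{U}$ is point-finite if each $x\in X$ lies in only finitely many $U\in\mathcal{U}$. Define $\Delta_X^{(c)}\colon[0,\infty)\to[0,\infty]$ by $\Delta_X^{(c)}(R)=\inf\{\mathrm{diam}(\mathcal{U}): \mathcal{U}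 \text{ a point-finite cover of } X \text{ with } \mathcal{L}(\mathcal{U})\geq R\}$. For $f\colon X\to Y$ between metric spaces, $\omega_f(t)=\sup\{d_Y(f(x_1),f(x_2)): d_X(x_1,x_2)\leq t\}$ and $\rho_f(t)=\inf\{d_Y(f(x_1),f(x_2)): d_X(x_1,x_2)\geq t\}$; $f$ is a coarse Lipschitz embedding if there exist $A\geq 1$, $B\geq 0$ with $\omega_f(t)\leq At+B$ and $\rho_f(t)\geq \frac1A t-B$ for all $t\geq 0$. *)

(* Defs.v *)
From HB Require Import structures.
From mathcomp Require Import all_boot all_order all_algebra.
From mathcomp Require Import all_classical all_reals all_analysis.
Set Implicit Arguments. Unset Strict Implicit. Unset Printing Implicit Defensive.
Import Order.TTheory GRing.Theory Num.Theory.
Local Open Scope classical_set_scope.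
Local Open Scope ring_scope.
Local Open Scope ereal_scope.

Section Defs.
Variables (R : realType) (X : Type) (d : X -> X -> R).

Definition is_metric : Prop :=
  (forall x y, (0 <= d x y)%R) /\
  (forall x y, d x y = 0%R <-> x = y) /\
  (forall x y, d x y = d y x) /\
  (forall x y z, (d x z <= d x y + d y z)%R).

Definition dense_in (S : set X) : Prop :=
  forall x (e : R), (0 < e)%R -> exists2 s, S s & (d x s < e)%R.

(* the type I has cardinality dens(X) : it is equinumerous with some dense
   subset, and injects into every dense subset *)
Definition has_density_character (I : Type) : Prop :=
  (exists S : set X, dense_in S /\ ([set: I] #= S)%card) /\
  (forall S : set X, dense_in S -> ([set: I] #<= S)%card).

(* diameter, in [0, +oo]; diam set0 = 0 *)
Definition diam (A : set X) : \bar R :=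
  ereal_sup ([set 0] `|` [set (d x y)%:E | x in A & y in A]).

Definition is_cover (U : set (set X)) : Prop := \bigcup_(A in U) A = setT.

Definition point_finite (U : set (set X)) : Prop :=
  forall x, finite_set [set A | U A /\ A x].

Definition diam_family (U : set (set X)) : \bar R :=
  ereal_sup ([set 0] `|` [set diam A | A in U]).

Definition lebesgue_number (U : set (set X)) : \bar R :=
  ereal_sup [set r%:E | r in [set r : R | (0 <= r)%R /\
     (forall E : set X, diam E < r%:E -> exists2 A, U A & E `<=` A)]].

Definition Delta_c (r : R) : \bar R :=
  ereal_inf [set diam_family U | U in
    [set U | is_cover U /\ point_finite U /\ r%:E <= lebesgue_number U]].
End Defs.

Section C0.
Variables (R : realType) (I : Type).

Definition c0plus (x : I -> R) : Prop :=
  (forall i, (0 <= x i)%R) /\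
  (forall eta : R, (0 < eta)%R -> finite_set [set i | (eta < `|x i|)%R]).

Definition supnorm (x : I -> R) : \bar R :=
  ereal_sup ([set 0] `|` [set (`|x i|)%:E | i in [set: I]]).
End C0.

Section Coarse.
Variables (R : realType) (X I : Type) (d : X -> X -> R) (f : X -> I -> R).

Definition dist_f (x1 x2 : X) : \bar R := supnorm (f x1 - f x2)%R.

Definition omega_f (t : R) : \bar R :=
  ereal_sup [set dist_f p.1 p.2 | p in [set p : X * X | (d p.1 p.2 <= t)%R]].

Definition rho_f (t : R) : \bar R :=
  ereal_inf [set dist_f p.1 p.2 | p in [set p : X * X | (t <= d p.1 p.2)%R]].

Definition coarse_lipschitz_embedding : Prop :=
  exists A B : R, (1 <= A)%R /\ (0 <= B)%R /\
    forall t : R, (0 <= t)%R ->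
      omega_f t <= (A * t + B)%:E /\ ((t / A - B)%:E <= rho_f t).
End Coarse.

(* Main.v *)
Require Import Defs.
From HB Require Import structures.
From mathcomp Require Import all_boot all_order all_algebra.
From mathcomp Require Import all_classical all_reals all_analysis.
From mathcomp Require Import lra ring zify.
Import Order.TTheory GRing.Theory Num.Theory.
Set Implicit Arguments. Unset Strict Implicit.
Local Open Scope classical_set_scope.
Local Open Scope ring_scope.
Local Open Scope card_scope.
Lemma card_le_ex T U (u0 : U) (A : set T) (B : set U) : A #<= B ->
  exists f : T -> U, (forall x, A x -> B (f x)) /\
    (forall x y, A x -> A y -> f x = f y -> x = y).
Proof.
move=> /card_leP[f].
exists (fun x => match pselect (A x) with left Ax => val (f (SigSub (mem_set Ax))) | right _ => u0 end).
split.
  move=> x Ax; case: pselect => // Ax'.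
  exact: set_mem (valP (f _)).
move=> x y Ax Ay; case: pselect => // Ax'; case: pselect => // Ay' /val_inj.
by move=> /(@inj _ _ _ f) => /(_ (mem_set I) (mem_set I)) /(congr1 val).
Qed.
Section Met.
Variables (R : realType) (X : Type) (d : X -> X -> R).
Hypothesis Hm : is_metric d.

Lemma d_ge0 x y : 0 <= d x y. Proof. by case: Hm. Qed.
Lemma d_xx x : d x x = 0. Proof. by case: Hm => _ [H _]; apply/H. Qed.
Lemma d_sym x y : d x y = d y x. Proof. by case: Hm => _ [_ [H _]]. Qed.
Lemma d_tri x y z : d x z <= d x y + d y z. Proof. by case: Hm => _ [_ [_ H]]. Qed.
End Met.
Lemma card_le_ex' T U (A : set T) (B : set U) (a0 : T) : A a0 -> A #<= B ->
  exists f : T -> U, (forall x, A x -> B (f x)) /\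
    (forall x y, A x -> A y -> f x = f y -> x = y).
Proof.
move=> Aa0 H; move/card_leP: (H) => [f].
exact: (@card_le_ex _ _ (val (f (SigSub (mem_set Aa0))))).
Qed.

Lemma seq_min (R : realType) (s : seq R) : (forall v, v \in s -> 0 < v) ->
  exists2 m, 0 < m & forall v, v \in s -> m <= v.
Proof.
elim: s => [|v s IH] H; first by exists 1.
have [|m m0 Hm] := IH; first by move=> w ws; apply: H; rewrite inE ws orbT.
exists (Num.min v m); first by rewrite lt_min m0 H ?inE ?eqxx.
move=> w; rewrite inE => /orP[/eqP ->|ws]; first by rewrite ge_min lexx.
by rewrite ge_min Hm ?orbT.
Qed.

Lemma finite_dense_all (R : realType) (X : Type) (d : X -> X -> R) (S : set X) :
  is_metric d -> dense_in d S -> finite_set S -> forall x, S x.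
Proof.
move=> Hm HS Sfin x; apply: contrapT => Sx.
pose V := [set d x s | s in S].
have Vfin : finite_set V by exact: finite_image.
have [|m m0 Hm'] := @seq_min R (finmap.enum_fset (fset_set V)).
  move=> v; rewrite in_fset_set // inE => -[s Ss <-].
  rewrite lt_def d_ge0 // andbT; apply/negP => /eqP.
  by case: Hm => _ [H _] /H xs; apply: Sx; rewrite xs.
have [s Ss] := HS x m m0; rewrite ltNge => /negP; apply; apply: Hm'.
by rewrite in_fset_set // inE; exists s.
Qed.
Lemma supnorm_ge (R : realType) (I : Type) (v : I -> R) i : ((`|v i|)%:E <= supnorm v)%E.
Proof. by apply: ereal_sup_ubound; right; exists i. Qed.

Lemma supnorm_le (R : realType) (I : Type) (v : I -> R) (M : R) : 0 <= M ->
  (forall i, `|v i| <= M) -> (supnorm v <= M%:E)%E.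
Proof. by move=> M0 H; apply: ge_ereal_sup => _ [->|[i _ <-]]; rewrite lee_fin. Qed.

Lemma supnorm_sym (R : realType) (I : Type) (f g : I -> R) : supnorm (f - g) = supnorm (g - f).
Proof.
rewrite /supnorm; congr ereal_sup; apply/seteqP; split => _ [->|[i _ <-]];
  by [left|right; exists i => //=; rewrite distrC].
Qed.

Lemma subfE (T : Type) (R : realType) (f g : T -> R) i : (f - g) i = f i - g i.
Proof. by []. Qed.

Lemma dist_lip (R : realType) (X : Type) (d : X -> X -> R) : is_metric d ->
  forall x y s, `|d x s - d y s| <= d x y.
Proof.
move=> Hm x y s; rewrite ler_norml; have h1 := d_tri Hm x y s; have h2 := d_tri Hm y x s.
by rewrite (d_sym Hm y x) in h2; apply/andP; split; lra.
Qed.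

Lemma frechet_case (R : realType) (X : Type) (d : X -> X -> R) (I : Type) (S : set X) (x0 : X) :
  is_metric d -> dense_in d S -> ([set: I] #= S) -> finite_set S ->
  forall K L : R, 1 <= K -> 0 <= L -> exists f : X -> I -> R, (forall x, c0plus (f x)) /\
  forall x y, ((d x y - L)%:E <= supnorm (f x - f y)%R)%E /\ (supnorm (f x - f y)%R <= (K * d x y)%:E)%E.
Proof.
move=> Hm HS HI Sfin K L K1 L0.
have Sall := finite_dense_all Hm HS Sfin.
have [g [_ ginj]] := card_le_ex' (Sall x0) ((card_eqPle _ _).1 (card_esym HI)).1.
pose phi i := if pselect (exists s, S s /\ g s = i) is left e then projT1 (cid e) else x0.
have phig y : phi (g y) = y.
  rewrite /phi; case: pselect => [e|]; last by move=> H; exfalso; apply: H; exists y.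
  case: (cid e) => s /= [Ss gs]; exact: ginj.
exists (fun x i => d x (phi i)); split.
  move=> x; split => [i|eta eta0]; first exact: d_ge0.
  apply: (@sub_finite_set _ _ [set: I]) => //.
  by rewrite (eq_finite_set HI).
move=> x y; split.
  apply: le_trans (supnorm_ge _ (g y)); rewrite lee_fin subfE /= !phig d_xx // subr0.
  by rewrite ger0_norm ?d_ge0 //; lra.
apply: supnorm_le => [|i /=].
  by rewrite mulr_ge0 ?d_ge0 //; lra.
by rewrite subfE; apply: le_trans (dist_lip Hm x y (phi i)) _; rewrite ler_peMl ?d_ge0.
Qed.
Section Met2.
Variables (R : realType) (X : Type) (d : X -> X -> R).
Hypothesis Hm : is_metric d.
Let d_ge0 := d_ge0 Hm. Let d_xx := d_xx Hm. Let d_sym := d_sym Hm. Let d_tri := d_tri Hm.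

Lemma diam_le (A : set X) x y : A x -> A y -> ((d x y)%:E <= diam d A)%E.
Proof. by move=> Ax Ay; apply: ereal_sup_ubound; right; exists x => //; exists y. Qed.

Lemma diam_ge0 (A : set X) : (0 <= diam d A)%E.
Proof. by apply: ereal_sup_ubound; left. Qed.

Lemma diam_family_ge (U : set (set X)) A : U A -> (diam d A <= diam_family d U)%E.
Proof. by move=> UA; apply: ereal_sup_ubound; right; exists A. Qed.

Lemma diam_ball y r : 0 <= r -> (diam d [set z | (d y z <= r)%R] <= (2 * r)%:E)%E.
Proof.
move=> r0; apply: ge_ereal_sup => _ [->|[a Ha [b Hb <-]]]; rewrite lee_fin.
  by rewrite mulr_ge0.
have h1 := d_tri a y b; rewrite (d_sym a y) in h1.
by move: Ha Hb => /= Ha Hb; lra.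
Qed.

Lemma leb_cont (U : set (set X)) r b : (r%:E <= lebesgue_number d U)%E ->
  0 <= b -> b < r -> forall E, (diam d E <= b%:E)%E -> exists2 A, U A & E `<=` A.
Proof.
move=> Hr b0 br E HE.
have : (b%:E < lebesgue_number d U)%E by apply: lt_le_trans Hr; rewrite lte_fin.
move=> /ereal_sup_gt[_ [s [s0 Hs] <-]]; rewrite lte_fin => bs.
by apply: Hs; apply: le_lt_trans HE _; rewrite lte_fin.
Qed.

Lemma cover_ex (C D : R) : (forall r : R, 0 <= r -> (Delta_c d r <= (C * r + D)%:E)%E) ->
  forall r eps, 0 <= r -> 0 < eps -> exists U : set (set X), [/\ is_cover U, point_finite U,
   (r%:E <= lebesgue_number d U)%E & (diam_family d U < (C * r + D + eps)%:E)%E].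
Proof.
move=> HD r eps r0 e0.
have : (Delta_c d r < (C * r + D + eps)%:E)%E.
  by apply: le_lt_trans (HD r r0) _; rewrite lte_fin; lra.
move=> /ereal_inf_lt[_ [U [H1 [H2 H3]] <-]] H4.
by exists U.
Qed.

Definition hfun (r : R) (A : set X) (x : X) : R :=
  inf ([set r] `|` [set d x z | z in ~` A]).

Variable (r : R) (A : set X).
Hypothesis r0 : 0 <= r.

Lemma hfun_lb x : has_lbound ([set r] `|` [set d x z | z in ~` A]).
Proof. by exists 0 => _ [->|[z _ <-]] //; exact: d_ge0. Qed.

Lemma hfun_ne x : ([set r] `|` [set d x z | z in ~` A]) !=set0.
Proof. by exists r; left. Qed.

Lemma hfun_ge0 x : 0 <= hfun r A x.
Proof. by apply: lb_le_inf; [exact: hfun_ne| move=> _ [->|[z _ <-]] //; exact: d_ge0]. Qed.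

Lemma hfun_le x : hfun r A x <= r.
Proof. by apply: ge_inf; [exact: hfun_lb|left]. Qed.

Lemma hfun_out x : ~ A x -> hfun r A x = 0.
Proof.
move=> Ax; apply/eqP; rewrite eq_le hfun_ge0 andbT.
by rewrite -(d_xx x); apply: ge_inf; [exact: hfun_lb|right; exists x].
Qed.

Lemma hfun_lip x x' : hfun r A x <= hfun r A x' + d x x'.
Proof.
rewrite -lerBlDr; apply: lb_le_inf; first exact: hfun_ne.
move=> _ [->|[z Az <-]].
  by rewrite lerBlDr; apply: ler_wpDr; [exact: d_ge0|exact: hfun_le].
rewrite lerBlDr; apply: (@le_trans _ _ (d x z)).
  by apply: ge_inf; [exact: hfun_lb|right; exists z].
by rewrite addrC; exact: d_tri.
Qed.

Lemma hfun_in y : (forall z, d y z <= r -> A z) -> hfun r A y = r.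
Proof.
move=> Hy; apply/eqP; rewrite eq_le hfun_le /=.
apply: lb_le_inf; first exact: hfun_ne.
move=> _ [->|[z Az <-]] //; rewrite leNgt; apply/negP => /ltW /Hy //.
Qed.

Lemma hfun_pos x : 0 < hfun r A x -> A x.
Proof. by move=> H; apply: contrapT => /hfun_out E; move: H; rewrite E ltxx. Qed.

Lemma hfun_dense (S : set X) x : dense_in d S -> 0 < hfun r A x -> exists2 s, S s & A s.
Proof.
move=> HS H; have [s Ss ds] := HS x _ H; exists s => //.
apply: contrapT => As; move: ds; rewrite ltNge => /negP; apply.
by apply: ge_inf; [exact: hfun_lb|right; exists s].
Qed.
End Met2.
Section CardNat.
Variables (T : Type) (A : set T).

Definition isPI (G : set ((T * nat) * T)) :=
 [/\ (forall a n y, G ((a,n),y) -> A a),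
     (forall p y y', G (p,y) -> G (p,y') -> y = y'),
     (forall p q y, G (p,y) -> G (q,y) -> p = q),
     (forall a n y m, G ((a,n),y) -> exists y', G ((a,m),y')) &
     (forall p y, G (p,y) -> exists m z, G ((y,m),z))].

Lemma isPI_chain : forall F : set (set ((T * nat) * T)),
  F `<=` isPI -> total_on F subset -> isPI (\bigcup_(X in F) X).
Proof.
move=> F FP Ftot; split.
- by move=> a n y [G FG Gy]; have [H _ _ _ _] := FP G FG; exact: H Gy.
- move=> p y y' [G FG Gy] [G' FG' Gy'].
  have [GG'|G'G] := Ftot G G' FG FG'.
  + by have [_ H _ _ _] := FP G' FG'; apply: H (GG' _ Gy) Gy'.
  + by have [_ H _ _ _] := FP G FG; apply: H Gy (G'G _ Gy').
- move=> p q y [G FG Gy] [G' FG' Gy'].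
  have [GG'|G'G] := Ftot G G' FG FG'.
  + by have [_ _ H _ _] := FP G' FG'; apply: H (GG' _ Gy) Gy'.
  + by have [_ _ H _ _] := FP G FG; apply: H Gy (G'G _ Gy').
- move=> a n y m [G FG Gy]; have [_ _ _ H _] := FP G FG.
  by have [y' Gy'] := H a n y m Gy; exists y', G.
- move=> p y [G FG Gy]; have [_ _ _ _ H] := FP G FG.
  by have [m [z Gz]] := H p y Gy; exists m, z, G.
Qed.

Lemma card_prod_nat : infinite_set A ->
  exists g : T -> nat -> T, (forall a n, A a -> A (g a n)) /\
   (forall a b n m, A a -> A b -> g a n = g b m -> a = b /\ n = m).
Proof.
move=> Ainf.
have [G [PG Gmax]] := Zorn_bigcup isPI_chain.
have [G1 G2 G3 G4 G5] := PG.
pose Bd a := exists n y, G ((a,n),y).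
have Ffin : finite_set (A `\` Bd).
  apply: contrapT => Finf.
  have [u0 _] := infinite_setN0 Finf.
  have := (infiniteP _).1 Finf.
  move=> /(@card_le_ex _ _ u0)[h [hF hinj]].
  pose G' := G `|` [set q | exists k n, q = ((h k, n), h (pickle (k,n)))].
  have hnB k : ~ Bd (h k) by have [] := hF k I.
  apply: (Gmax G'); last first.
    split.
    - move=> a n y [Gy|[k [n' [-> _ _]]]]; first exact: G1 Gy.
      by have [] := hF k I.
    - move=> p y y' [Gy|[k [n [-> ->]]]] [Gy'|[k' [n' [ep ->]]]].
      + exact: G2 Gy Gy'.
      + by exfalso; apply: (hnB k'); rewrite ep in Gy; exists n', y.
      + by exfalso; apply: (hnB k); exists n, y'.
      + case: ep => /hinj-/(_ I I) -> ->//.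
    - move=> p q y [Gy|[k [n [-> ->]]]] [Gy'|[k' [n' [-> ey]]]].
      + exact: G3 Gy Gy'.
      + exfalso; have [m [z Gz]] := G5 _ _ Gy; apply: (hnB (pickle (k', n'))).
        by rewrite -ey; exists m, z.
      + exfalso; have [m [z Gz]] := G5 _ _ Gy'; apply: (hnB (pickle (k, n))).
        by exists m, z.
      + move: ey => /hinj-/(_ I I) /(pcan_inj pickleK) [-> ->] //.
    - move=> a n y m [Gy|[k [n' [[-> _] _]]]].
      + by have [y' Gy'] := G4 _ _ _ m Gy; exists y'; left.
      + by exists (h (pickle (k, m))); right; exists k, m.
    - move=> p y [Gy|[k [n [_ ->]]]].
      + by have [m [z Gz]] := G5 _ _ Gy; exists m, z; left.
      + by exists 0%N, (h (pickle (pickle (k, n), 0%N))); right; exists (pickle (k, n)), 0%N.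
  split; first by move=> q Gq; left.
  move=> /(_ ((h 0%N, 0%N), h (pickle (0%N, 0%N)))) H.
  have : G ((h 0%N, 0%N), h (pickle (0%N, 0%N))) by apply: H; right; exists 0%N, 0%N.
  by move=> Gq; apply: (hnB 0%N); exists 0%N, (h (pickle (0%N, 0%N))).
have [b0 Bb0] : Bd !=set0.
  apply/set0P/negP => /eqP B0; apply: Ainf; move: Ffin; rewrite B0.
  by rewrite setD0.
have [m Fm] := Ffin.
have [e [_ einj]] := @card_le_ex _ _ 0%N _ _ (((card_eqPle _ _).1 Fm).1).
have Gtot p : Bd p.1 -> exists y, G (p, y).
  by case: p => a n /= [n' [y Gy]]; have := G4 _ _ _ n Gy.
pose Gf p := match pselect (exists y, G (p, y)) with
   left ex => projT1 (cid ex) | right _ => b0 end.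
have GfP p : Bd p.1 -> G (p, Gf p).
  move=> /Gtot ex; rewrite /Gf; case: pselect => // ex'.
  exact: projT2 (cid ex').
have GA p y : G (p, y) -> A y.
  by move=> /G5[m' [z /G1]].
exists (fun a n => if pselect (Bd a) is left _ then Gf (a, (2 * n)%N)
  else Gf (b0, (2 * pickle (e a, n)).+1)).
split.
  move=> a n Aa; case: pselect => Ba.
  - exact: GA (GfP (a, (2 * n)%N) Ba).
  - exact: GA (GfP (b0, _) Bb0).
move=> a b n n' Aa Ab; case: pselect => Ba; case: pselect => Bb.
- move=> E.
  have := G3 _ _ _ (GfP (a, (2 * n)%N) Ba); rewrite E => /(_ _ (GfP (b, _) Bb)).
  by case=> -> /eqP; rewrite eqn_mul2l /= => /eqP ->.
- move=> E; have := G3 _ _ _ (GfP (a, (2 * n)%N) Ba); rewrite E => /(_ _ (GfP (b0, _) Bb0)).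
  by case=> _ /(congr1 odd); rewrite /= ?oddS ?oddM.
- move=> E; have := G3 _ _ _ (GfP (b0, (2 * pickle (e a, n)).+1) Bb0); rewrite E => /(_ _ (GfP (b, (2 * n')%N) Bb)).
  by case=> _ /(congr1 odd); rewrite /= ?oddS ?oddM.
- move=> E; have := G3 _ _ _ (GfP (b0, (2 * pickle (e a, n)).+1) Bb0); rewrite E => /(_ _ (GfP (b0, (2 * pickle (e b, n')).+1) Bb0)).
  case=> /eqP; rewrite eqn_mul2l /= => /eqP /(pcan_inj pickleK) [eab ->]; split => //.
  by apply: einj.
Qed.
End CardNat.
Lemma minmax_lip (R : realType) (a b u v e : R) : 0 <= e -> a <= b + e -> u <= v + e ->
  Num.min a (Num.max 0 u) <= Num.min b (Num.max 0 v) + e.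
Proof.
move=> e0 ab uv.
case: (ltP 0 u) => u0; case: (ltP 0 v) => v0.
- by case: (ltP a u) => ?; case: (ltP b v) => ?; lra.
- by case: (ltP a u) => ?; case: (ltP b 0) => ?; lra.
- by case: (ltP a 0) => ?; case: (ltP b v) => ?; lra.
- by case: (ltP a 0) => ?; case: (ltP b 0) => ?; lra.
Qed.
Lemma int_window_finite (R : realType) (lo hi : R) :
  finite_set [set n : int | lo <= n%:~R <= hi].
Proof.
pose M := `|lo| + `|hi|.
pose N := `|Num.ceil M|%N.
have cM0 : (0 <= Num.ceil M)%R by rewrite ceil_ge0; have := normr_ge0 lo; have := normr_ge0 hi; rewrite /M; lra.
apply: (@sub_finite_set _ _ ((fun k : nat => k%:Z - N%:Z) @` `I_(N + N).+1)); last first.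
  exact/finite_image/finite_II.
move=> n /andP[h1 h2].
have hn : (`|n| <= Num.ceil M)%R.
  rewrite -(ler_int R); apply: le_trans (ceil_ge M).
  rewrite intr_norm ler_norml; have := ler_norm lo; have := ler_norm hi.
  have := ler_norm (- lo); rewrite normrN => *.
  have := normr_ge0 hi; have := normr_ge0 lo => *.
  by apply/andP; split; rewrite /M; lra.
have eN : (N%:Z = Num.ceil M) by rewrite /N gez0_abs.
exists (absz (n + N%:Z)); last by rewrite gez0_abs; [ring|lia].
rewrite /=; lia.
Qed.
Lemma coarse_of_bounds (R : realType) (X I : Type) (d : X -> X -> R) (f : X -> I -> R)
  (K L : R) : 1 <= K -> 0 <= L ->
  (forall x y, ((d x y - L)%:E <= supnorm (f x - f y)%R)%E /\
               (supnorm (f x - f y)%R <= (K * d x y)%:E)%E) ->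
  coarse_lipschitz_embedding d f.
Proof.
move=> K1 L0 H; exists K, L; split => //; split => // t t0; split.
  apply: ge_ereal_sup => _ [[x y] /= dxy <-].
  apply: le_trans (H x y).2 _; rewrite lee_fin.
  by apply: le_trans (ler_wpDr L0 (lexx _)); apply: ler_wpM2l => //; lra.
apply: le_ereal_inf_tmp => _ [[x y] /= dxy <-].
apply: le_trans (H x y).1; rewrite lee_fin lerD2r.
apply: le_trans dxy; rewrite ler_pdivrMr; last by lra.
by rewrite ler_peMr.
Qed.


Section Main.
Variables (R : realType) (X : Type) (d : X -> X -> R) (I : Type) (S : set X)
  (C D K L : R) (x0 : X).
Hypotheses (Hm : is_metric d) (HS : dense_in d S) (C1 : 1 <= C) (D0 : 0 <= D)
  (HD : forall r : R, 0 <= r -> (Delta_c d r <= (C * r + D)%:E)%E)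
  (KC : 2 * C < K) (DL : D <= L) (L0 : 0 <= L).

Ltac gh := have ? := KC; have ? := C1; have ? := D0; have ? := DL; have ? := L0.
Let d_ge0 := d_ge0 Hm. Let d_xx := d_xx Hm. Let d_sym := d_sym Hm. Let d_tri := d_tri Hm.

Definition mu := K / 2 - C.
Definition th := mu / (2 * (C + 1)).
Definition ep := mu / 4.
Definition qq := (C + mu) / (C + mu / 2).
Definition rho := ln qq.
Definition Rn (n : int) := expR (rho * n%:~R).

Lemma mu_gt0 : 0 < mu. Proof. gh; rewrite /mu subr_gt0 ltr_pdivlMr //; lra. Qed.
Lemma th_gt0 : 0 < th.
Proof. by gh; rewrite /th divr_gt0 ?mu_gt0 //; lra. Qed.
Lemma thE : th * (C + 1) = mu / 2.
Proof. gh; rewrite /th; field; apply/eqP; lra. Qed.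
Lemma qq_gt1 : 1 < qq.
Proof. gh; have ? := mu_gt0; rewrite /qq ltr_pdivlMr; lra. Qed.
Lemma rho_gt0 : 0 < rho. Proof. exact: ln_gt0 qq_gt1. Qed.
Lemma Rn_gt0 n : 0 < Rn n. Proof. exact: expR_gt0. Qed.

Lemma Ucov_ex n : exists U : set (set X), [/\ is_cover U, point_finite U,
   (((1 + th) * Rn n)%:E <= lebesgue_number d U)%E &
   (diam_family d U < (C * ((1 + th) * Rn n) + D + th * Rn n)%:E)%E].
Proof.
apply: cover_ex => //.
  by apply: mulr_ge0; [have := th_gt0; lra|exact: ltW (Rn_gt0 n)].
exact: mulr_gt0 th_gt0 (Rn_gt0 n).
Qed.

Definition Ucov n := projT1 (cid (Ucov_ex n)).
Lemma UcovP n : [/\ is_cover (Ucov n), point_finite (Ucov n),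
   (((1 + th) * Rn n)%:E <= lebesgue_number d (Ucov n))%E &
   (diam_family d (Ucov n) < (C * ((1 + th) * Rn n) + D + th * Rn n)%:E)%E].
Proof. exact: projT2 (cid (Ucov_ex n)). Qed.

Definition hh n A x := hfun d (Rn n / 2) A x.
Definition phi (j : int * set X) x :=
  K * Num.min (hh j.1 j.2 x) (Num.max 0 (d x x0 - ep * Rn j.1)).

Lemma Rn2_ge0 n : 0 <= Rn n / 2.
Proof. by have := Rn_gt0 n; lra. Qed.

Lemma K_gt0 : 0 < K. Proof. gh; lra. Qed.

Lemma phi_ge0 j x : 0 <= phi j x.
Proof.
rewrite /phi mulr_ge0 //; first exact: ltW K_gt0.
rewrite le_min le_max lexx orTb andbT; apply: hfun_ge0 => //; exact: Rn2_ge0.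
Qed.

Lemma phi_le j x : phi j x <= K * (Rn j.1 / 2).
Proof.
rewrite /phi ler_pM2l ?K_gt0 //; apply: le_trans (hfun_le Hm _ _ _); last exact: Rn2_ge0.
by rewrite ge_min; apply/orP; left; rewrite /hh.
Qed.

Lemma phi_lip j x y : phi j x <= phi j y + K * d x y.
Proof.
rewrite /phi -mulrDr ler_pM2l ?K_gt0 //; apply: minmax_lip; first exact: d_ge0.
  by rewrite /hh; apply: (hfun_lip Hm) => //; exact: Rn2_ge0.
by have := d_tri x y x0; lra.
Qed.

Lemma window (Lo : R) : 0 < Lo -> exists n : int, Lo <= Rn n /\ Rn n <= qq * Lo.
Proof.
move=> Lo0; have r0 := rho_gt0; have q1 := qq_gt1.
have eLo : expR (ln Lo) = Lo by apply: lnK; rewrite posrE.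
have eq : expR rho = qq by apply: lnK; rewrite posrE; lra.
exists (Num.ceil (ln Lo / rho)); rewrite /Rn; split.
  rewrite -{1}eLo ler_expR -ler_pdivrMl // mulrC; exact: ceil_ge.
have := ceilB1_lt (ln Lo / rho); rewrite ltr_pdivlMr // intrD => h.
have E : qq * Lo = expR (ln Lo + rho) by rewrite expRD eLo eq mulrC.
rewrite E ler_expR; rewrite mulrBl mul1r in h; rewrite mulrC; lra.
Qed.

Lemma lower x y : L < d x y -> d x x0 <= d y x0 ->
  exists j, [/\ Ucov j.1 j.2, phi j x = 0 & d x y - L <= phi j y].
Proof.
move=> tL xy; gh; have mu0 := mu_gt0; have th0 := th_gt0.
set t := d x y in tL *.
pose Lo := (t - L) / (C + mu).
have Lo0 : 0 < Lo by rewrite /Lo divr_gt0 //; lra.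
have [n [H1 H2]] := window Lo0.
set r := Rn n in H1 H2.
have r0 : 0 < r := Rn_gt0 n.
have [_ _ Hleb Hdiam] := UcovP n.
have Hball : (diam d [set z | (d y z <= r / 2)%R] <= r%:E)%E.
  by apply: le_trans (diam_ball Hm y (ltW _)) _; rewrite ?lee_fin; lra.
have [||A UA BA] := leb_cont Hleb _ _ Hball.
- exact: ltW.
- by rewrite -[X in X < _]mul1r ltr_pM2r //; lra.
have hy : hh n A y = r / 2 by rewrite /hh; apply: (hfun_in Hm); [rewrite -/r; lra|move=> z /BA].
have key : (C + mu / 2) * r <= t - L.
  have -> : t - L = (C + mu / 2) * (qq * Lo) by rewrite /qq /Lo; field; apply/andP; split; apply/eqP; lra.
  by rewrite ler_pM2l //; lra.
have Ax : ~ A x.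
  move=> Ax; have Ay : A y by apply: BA; rewrite /= d_xx; lra.
  have := le_lt_trans (le_trans (diam_le d Ax Ay) (diam_family_ge d UA)) Hdiam.
  rewrite lte_fin -/t => h.
  have e1 : C * ((1 + th) * r) + D + th * r = (C + th * (C + 1)) * r + D by ring.
  rewrite e1 thE in h; lra.
exists (n, A); split => //=.
  by rewrite /phi /= /hh (hfun_out Hm) ?Rn2_ge0 // min_l ?mulr0 // le_max lexx.
have dy : t <= 2 * d y x0 by have := d_tri x x0 y; rewrite (d_sym x0 y) -/t; lra.
have e1 : ep * r = mu * r / 4 by rewrite /ep mulrAC.
have k1 : r <= C * r by rewrite ler_peMl //; lra.
have k2 : (C + mu / 2) * r = C * r + mu * r / 2 by rewrite mulrDl mulrAC.
rewrite /phi /= hy min_l; last first.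
  by rewrite le_max; apply/orP; right; rewrite e1; lra.
have -> : K * (r / 2) = (C + mu) * r by rewrite /mu; field.
have -> : t - L = (C + mu) * Lo by rewrite /Lo; field; apply/eqP; lra.
by rewrite ler_pM2l //; lra.
Qed.

Lemma phi_pos j x : 0 < phi j x -> [/\ j.2 x, 0 < hh j.1 j.2 x & ep * Rn j.1 < d x x0].
Proof.
rewrite /phi pmulr_rgt0 ?K_gt0 // lt_min => /andP[h1 h2]; split => //.
  exact: (hfun_pos Hm (Rn2_ge0 j.1)).
by move: h2; rewrite lt_max ltxx /= subr_gt0.
Qed.

Definition Jrel (j : int * set X) := Ucov j.1 j.2 /\ exists x, 0 < phi j x.

Definition sj (j : int * set X) :=
  if pselect (exists s, S s /\ j.2 s) is left e then projT1 (cid e) else x0.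

Lemma sjP j : Jrel j -> S (sj j) /\ j.2 (sj j).
Proof.
move=> [_ [x /phi_pos [_ hx _]]].
have [s Ss As] := hfun_dense Hm (Rn2_ge0 j.1) HS hx.
rewrite /sj; case: pselect => [e|]; first exact: projT2 (cid e).
by move=> H; exfalso; apply: H; exists s.
Qed.

Lemma kfun_ex n s : exists k : set X -> nat, forall A B,
  Ucov n A /\ A s -> Ucov n B /\ B s -> k A = k B -> A = B.
Proof.
have [_ pf _ _] := UcovP n.
have [m Fm] := pf s.
have [k [_ kinj]] := @card_le_ex _ _ 0%N _ _ (((card_eqPle _ _).1 Fm).1).
by exists k => A B HA HB; apply: kinj.
Qed.

Definition kfun n s := projT1 (cid (kfun_ex n s)).
Lemma kfunP n s A B : Ucov n A /\ A s -> Ucov n B /\ B s -> kfun n s A = kfun n s B -> A = B.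
Proof. by rewrite /kfun; case: (cid (kfun_ex n s)) => k /= H; apply: H. Qed.

Variables (g : X -> nat -> X) (toI : X -> I).
Hypotheses (gS : forall a n, S a -> S (g a n))
  (ginj : forall a b n m, S a -> S b -> g a n = g b m -> a = b /\ n = m)
  (toIinj : forall a b, S a -> S b -> toI a = toI b -> a = b).

Definition iota (j : int * set X) := toI (g (sj j) (pickle (j.1, kfun j.1 (sj j) j.2))).

Lemma iota_inj j j' : Jrel j -> Jrel j' -> iota j = iota j' -> j = j'.
Proof.
move=> Jj Jj'; have [Ss As] := sjP Jj; have [Ss' As'] := sjP Jj'.
move=> /toIinj -/(_ (gS _ Ss) (gS _ Ss')) /ginj -/(_ Ss Ss') [es /(pcan_inj pickleK) [en ek]].
case: j Jj As ek en es Ss => n A Jj As /= ek en es Ss.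
case: j' Jj' As' ek en es Ss' => n' A' Jj' As' /= ek en es Ss'.
subst n'; rewrite es in ek As.
congr pair; apply: (kfunP _ _ ek); split => //.
  by case: Jj.
by case: Jj'.
Qed.

Definition fco x i :=
  if pselect (exists j, Jrel j /\ iota j = i) is left e then phi (projT1 (cid e)) x else 0.

Lemma fco_iota j x : Jrel j -> fco x (iota j) = phi j x.
Proof.
move=> Jj; rewrite /fco; case: pselect => [e|]; last by move=> H; exfalso; apply: H; exists j.
by case: (cid e) => j' /= [Jj' /iota_inj ->].
Qed.

Lemma fco_cases i : (forall x, fco x i = 0) \/
  exists j, [/\ Jrel j, iota j = i & forall x, fco x i = phi j x].
Proof.
rewrite /fco; case: pselect => [e|]; last by left.
by right; case: (cid e) => j /= [Jj ij]; exists j.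
Qed.

Lemma Jfin x eta : 0 < eta -> finite_set [set j | Jrel j /\ eta < phi j x].
Proof.
move=> eta0.
pose W := [set n : int | ln (2 * eta / K) / rho <= n%:~R <= ln (d x x0 / ep) / rho].
apply: (@sub_finite_set _ _ (\bigcup_(n in W) [set (n, A) | A in [set A | Ucov n A /\ A x]])).
  move=> [n A] [[UA _] /= hphi].
  have [/= Ax _ hep] := phi_pos (lt_trans eta0 hphi).
  have rho0 := rho_gt0; have K0 := K_gt0; have ep0 : 0 < ep by rewrite /ep; have := mu_gt0; lra.
  have hRn := Rn_gt0 n.
  exists n; last by exists A.
  have h1 : 2 * eta / K < Rn n.
    rewrite ltr_pdivrMr //; have := lt_le_trans hphi (phi_le _ _) => /=; lra.
  have h2 : Rn n < d x x0 / ep by rewrite ltr_pdivlMr // mulrC.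
  have lnR : ln (Rn n) = n%:~R * rho by rewrite /Rn expRK mulrC.
  apply/andP; split.
    rewrite ler_pdivrMr // -lnR; apply/ltW.
    by rewrite ltr_ln ?posrE //; apply: divr_gt0 => //; lra.
  rewrite ler_pdivlMr // -lnR; apply/ltW.
  by rewrite ltr_ln ?posrE //; apply: lt_trans h2.
apply: bigcup_finite; first exact: int_window_finite.
move=> n _; apply: finite_image; by have [_ pf _ _] := UcovP n.
Qed.

Lemma fco_c0 x : c0plus (fco x).
Proof.
split=> [i|eta eta0].
  by case: (fco_cases i) => [H|[j [_ _ H]]]; rewrite H //; exact: phi_ge0.
apply: (@sub_finite_set _ _ (iota @` [set j | Jrel j /\ eta < phi j x])); last first.
  exact/finite_image/Jfin.
move=> i /=; case: (fco_cases i) => [H|[j [Jj <- H]]]; rewrite H.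
  by rewrite normr0 => h; have := lt_trans eta0 h; rewrite ltxx.
by rewrite ger0_norm ?phi_ge0 // => h; exists j.
Qed.

Lemma fco_upper x y : (supnorm (fco x - fco y)%R <= (K * d x y)%:E)%E.
Proof.
apply: supnorm_le => [|i]; first by rewrite mulr_ge0 ?d_ge0 // ltW // K_gt0.
rewrite subfE; case: (fco_cases i) => [H|[j [_ _ H]]]; rewrite !H.
  by rewrite subrr normr0 mulr_ge0 ?d_ge0 // ltW // K_gt0.
rewrite ler_norml; have := phi_lip j x y; have := phi_lip j y x; rewrite (d_sym y x).
by move=> *; apply/andP; split; lra.
Qed.

Lemma fco_lower x y : ((d x y - L)%:E <= supnorm (fco x - fco y)%R)%E.
Proof.
case: (leP (d x y) L) => hL.
  apply: (@le_trans _ _ 0%:E); first by rewrite lee_fin; lra.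
  by apply: ereal_sup_ubound; left.
wlog xy : x y hL / d x x0 <= d y x0.
  move=> H; case: (leP (d x x0) (d y x0)) => h; first exact: H.
  by rewrite supnorm_sym d_sym; apply: H; [rewrite d_sym|exact: ltW h].
have [j [Uj phx phy]] := lower hL xy.
have Jj : Jrel j by split => //; exists y; lra.
apply: le_trans (supnorm_ge _ (iota j)).
by rewrite subfE !fco_iota // phx sub0r normrN ger0_norm ?phi_ge0 // lee_fin.
Qed.
End Main.


Lemma core (R : realType) (X : Type) (d : X -> X -> R) (I : Type) (C D : R) :
  is_metric d -> has_density_character d I -> 1 <= C -> 0 <= D ->
  (forall r : R, 0 <= r -> (Delta_c d r <= (C * r + D)%:E)%E) ->
  forall K L : R, 2 * C < K -> D <= L -> 0 <= L ->
  exists f : X -> I -> R, (forall x, c0plus (f x)) /\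
    forall x y, ((d x y - L)%:E <= supnorm (f x - f y)%R)%E /\
                (supnorm (f x - f y)%R <= (K * d x y)%:E)%E.
Proof.
move=> Hm [[S [HS HI]] _] C1 D0 HD K L KC DL L0.
have [[x0 _]|nX] := pselect (exists x : X, True); last first.
  by exists (fun _ _ => 0); split => x; exfalso; apply: nX; exists x.
have [Sfin|Sinf] := pselect (finite_set S).
  by apply: (frechet_case x0 Hm HS HI Sfin) => //; lra.
have [g [gS ginj]] := card_prod_nat Sinf.
have [s0 Ss0 _] := HS x0 1 ltr01.
have [toI [_ toIinj]] := card_le_ex' Ss0 ((card_eqPle _ _).1 (card_esym HI)).1.
exists (@fco R X d I S C D K L x0 C1 D0 HD KC DL L0 g toI); split.
  by move=> x; apply: fco_c0.
move=> x y; split.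
  exact: (fco_lower x0 Hm HS C1 D0 HD KC DL L0 gS ginj toIinj).
exact: (@fco_upper R X d I S C D K L x0 Hm C1 D0 HD KC DL L0 g toI).
Qed.

Lemma main_aux (R : realType) (X : Type) (d : X -> X -> R) (I : Type)
  (C D : R) :
  is_metric d ->
  has_density_character d I ->
  (1 <= C)%R -> (0 <= D)%R ->
  (forall r : R, (0 <= r)%R -> (Delta_c d r <= (C * r + D)%:E)%E) ->
  (forall lam K L : R, (0 < lam)%R -> (2 * (C + lam) < K)%R ->
     ((C + lam) * D / lam < L)%R ->
     exists f : X -> I -> R,
       (forall x, c0plus (f x)) /\ coarse_lipschitz_embedding d f /\
       forall x y, ((d x y - L)%:E <= supnorm (f x - f y)%R)%E /\
                   (supnorm (f x - f y)%R <= (K * d x y)%:E)%E) /\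
  (D = 0%R -> forall lam K : R, (0 < lam)%R -> (2 * (C + lam) < K)%R ->
     exists f : X -> I -> R,
       (forall x, c0plus (f x)) /\ coarse_lipschitz_embedding d f /\
       forall x y, ((d x y)%:E <= supnorm (f x - f y)%R)%E /\
                   (supnorm (f x - f y)%R <= (K * d x y)%:E)%E).
Proof.
move=> Hm HI C1 D0 HD; split.
  move=> lam K L lam0 KC HL.
  have DL : D <= L.
    apply: le_trans (ltW HL); rewrite ler_pdivlMr // mulrC ler_wpM2r //; lra.
  have [|||f [Hc Hb]] := core Hm HI C1 D0 HD (K := K) (L := L) => //; try lra.
  exists f; split => //; split => //.
  by apply: (coarse_of_bounds (K := K) (L := L)) => //; lra.
move=> D00 lam K lam0 KC.
have [|||f [Hc Hb]] := core Hm HI C1 D0 HD (K := K) (L := 0) => //; try lra.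
exists f; split => //; split.
  by apply: (coarse_of_bounds (K := K) (L := 0)) => //; lra.
by move=> x y; have := Hb x y; rewrite subr0.
Qed.

Unset Implicit Arguments.
Local Open Scope ereal_scope.

Theorem mainTheorem1 (R : realType) (X : Type) (d : X -> X -> R) (I : Type)
  (C D : R) :
  is_metric d ->
  has_density_character d I ->
  (1 <= C)%R -> (0 <= D)%R ->
  (forall r : R, (0 <= r)%R -> Delta_c d r <= (C * r + D)%:E) ->
  (forall lam K L : R, (0 < lam)%R -> (2 * (C + lam) < K)%R ->
     ((C + lam) * D / lam < L)%R ->
     exists f : X -> I -> R,
       (forall x, c0plus (f x)) /\ coarse_lipschitz_embedding d f /\
       forall x y, (d x y - L)%:E <= supnorm (f x - f y)%R /\
                   supnorm (f x - f y)%R <= (K * d x y)%:E) /\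
  (D = 0%R -> forall lam K : R, (0 < lam)%R -> (2 * (C + lam) < K)%R ->
     exists f : X -> I -> R,
       (forall x, c0plus (f x)) /\ coarse_lipschitz_embedding d f /\
       forall x y, (d x y)%:E <= supnorm (f x - f y)%R /\
                   supnorm (f x - f y)%R <= (K * d x y)%:E).
Proof. exact: main_aux. Qed.
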